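(* Let $C$ be a linear completely regular $[n,k,2]_q$ code with covering radius $\rho=1$ and $k<n-1$, and let $n_a$ be the number of codewords at distance one from any vector not in $C$. Let $X_1,\dots,X_{n/n_a}$ be a partition of the coordinate set $\{1,\dots,n\}$ into sets of size $n_a$ such that the support of every weight-2 codeword of $C$ is contained in one of the $X_j$. For each $j$, fix a coordinate $i_j\in X_j$, let $I=\{i_1,\dots,i_{n/n_a}\}$, let $D'$ be the set of codewords of $C$ whose support is contained in $I$, and let $D$ be the code obtained from $D'$ by deleting all coordinates outside $I$. Then $n/n_a\ge 3$ and $D$ is a $q$-ary Hamming code of length $n/n_a$.
   Context: $\mathbb{F}_q$ is the finite field with $q$ elements; the support of a vector is its set of nonzero coordinates; Hamming distance; covering radius $\rho=\max_{\bf v}\min_{{\bf x}\in C}d({\bf v},{\bf x})$. $C$ is completely regular if for every vector ${\bf x}$, with $t=d({\bf x},C)$, the number of codewords at distance $i$ from ${\bf x}$ depends only on $t$ and $i$. For $m\ge 2$ a $q$-ary Hamming code of length $(q^m-1)/(q-1)$ is a linear code with an $m\times (q^m-1)/(q-1)$ parity-check matrix whose columns are nonzero and pairwise linearly independent. *)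

(* Defs.v *)
From HB Require Import structures.
From mathcomp Require Import all_boot all_order all_algebra all_field.
Set Implicit Arguments. Unset Strict Implicit. Unset Printing Implicit Defensive.
Import GRing.Theory.
Local Open Scope ring_scope.

Section Codes.
Variable F : finFieldType.

Definition supp n (x : 'rV[F]_n) : {set 'I_n} := [set i | x 0 i != 0].

Definition hdist n (x y : 'rV[F]_n) : nat := #|[set i | x 0 i != y 0 i]|.
Definition wt n (x : 'rV[F]_n) : nat := #|supp x|.

Definition code_set n (C : {vspace 'rV[F]_n}) : {set 'rV[F]_n} :=
  [set x | x \in C].

Definition min_dist n (C : {vspace 'rV[F]_n}) : nat :=
  \big[minn/n.+1]_(c in code_set C | c != 0) wt c.

Definition dist_code n (C : {vspace 'rV[F]_n}) (v : 'rV[F]_n) : nat :=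
  \big[minn/n]_(c in code_set C) hdist v c.

Definition cov_radius n (C : {vspace 'rV[F]_n}) : nat :=
  \max_(v : 'rV[F]_n) dist_code C v.

Definition completely_regular n (C : {vspace 'rV[F]_n}) : Prop :=
  exists f : nat -> nat -> nat, forall (x : 'rV[F]_n) (i : nat),
    #|[set c in code_set C | hdist x c == i]| = f (dist_code C x) i.

Definition hamming_code N (D : {set 'rV[F]_N}) : Prop :=
  exists r : nat, (2 <= r)%N /\ N = ((#|F| ^ r - 1) %/ (#|F| - 1))%N /\
  exists H : 'M[F]_(r, N),
    (forall j, col j H != 0) /\
    (forall j1 j2, j1 != j2 -> \rank (row_mx (col j1 H) (col j2 H)) = 2%N) /\
    D = [set x : 'rV[F]_N | H *m x^T == 0].

End Codes.

(* Main.v *)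
Require Import Defs.
From HB Require Import structures.
From mathcomp Require Import all_boot all_order all_algebra all_field.
From mathcomp Require Import zify.
Import GRing.Theory.
Local Open Scope ring_scope.

Lemma bigmin_geq (I : finType) (P : pred I) (f : I -> nat) (d mm : nat) :
  (mm <= d)%N -> (forall i, P i -> mm <= f i)%N ->
  (mm <= \big[minn/d]_(i | P i) f i)%N.
Proof.
move=> hd hf; apply: (big_ind (fun x => mm <= x)%N) => //.
by move=> x y hx hy; rewrite leq_min hx hy.
Qed.

Lemma bigmin_leq (I : finType) (P : pred I) (f : I -> nat) (d : nat) i0 :
  P i0 -> (\big[minn/d]_(i | P i) f i <= f i0)%N.
Proof.
move=> Pi0; have : i0 \in index_enum I by rewrite mem_index_enum.
elim: (index_enum I) => //= x r IH; rewrite inE big_cons.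
case/orP=> [/eqP<-|/IH h]; first by rewrite Pi0 geq_minl.
by case: (P x) => //; exact: leq_trans (geq_minr _ _) h.
Qed.

Lemma syndrome_exists (F : finFieldType) (n : nat) (C : {vspace 'rV[F]_n}) :
  exists r (G : 'M[F]_(n, r)),
    (forall x, (x \in C) = (x *m G == 0)) /\
    (forall y : 'rV_r, exists x, x *m G = y) /\ (\dim C + r = n)%N.
Proof.
pose e := enum (code_set C).
pose N := #|code_set C|.
pose B : 'M[F]_(N, n) := \matrix_(i < N) nth 0 e i.
have hB : forall x, (x \in C) = (x <= B)%MS.
  move=> x; apply/idP/idP.
  - move=> xC; have xe : x \in e by rewrite mem_enum inE.
    have hi : (index x e < N)%N by rewrite /N cardE index_mem.
    rewrite -(nth_index 0 xe).
    have -> : nth 0 e (index x e) = row (Ordinal hi) B by rewrite rowK.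
    exact: row_sub.
  - case/submxP=> w ->; rewrite mulmx_sum_row; apply: memv_suml => i _.
    apply: memvZ; rewrite rowK.
    have : nth 0 e i \in e by apply: mem_nth; rewrite -cardE.
    by rewrite mem_enum inE.
pose P := kermx B^T.
pose H := row_base P.
have BP : B *m P^T = 0.
  have : (P *m B^T)^T = 0 by rewrite mulmx_ker trmx0.
  by rewrite trmx_mul trmxK.
have sB : (B <= kermx P^T)%MS by apply/sub_kermxP.
have rk : \rank (kermx P^T) = \rank B.
  by rewrite mxrank_ker mxrank_tr /P mxrank_ker mxrank_tr subKn // rank_leq_col.
have sK : (kermx P^T <= B)%MS by rewrite -(mxrank_leqif_sup sB).2 rk.
have sPH : (P <= H)%MS by rewrite eq_row_base.
have sHP : (H <= P)%MS by rewrite eq_row_base.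
have kerC : forall x, (x \in C) = (x *m H^T == 0).
  move=> x; rewrite hB.
  have -> : (x <= B)%MS = (x <= kermx P^T)%MS.
    apply/idP/idP => h; [exact: submx_trans h sB | exact: submx_trans h sK].
  have -> : (x <= kermx P^T)%MS = (x *m P^T == 0) by apply/sub_kermxP/eqP.
  case/submxP: sPH => W1 eW1; case/submxP: sHP => W2 eW2.
  apply/eqP/eqP => h.
  - by rewrite eW2 trmx_mul mulmxA h mul0mx.
  - by rewrite eW1 trmx_mul mulmxA h mul0mx.
have full : row_full H^T by rewrite /row_full mxrank_tr; exact: row_base_free.
have surj : forall y : 'rV_(\rank P), exists x, x *m H^T = y.
  by move=> y; case/submxP: (submx_full y full) => x ->; exists x.
exists (\rank P), H^T; split => //; split => //.
pose f : 'Hom('rV[F]_n, 'rV[F]_(\rank P)) := linfun (mulmxr H^T).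
have kerf : lker f = C by apply/vspaceP => x; rewrite memv_ker lfunE /= kerC.
have imf : (f @: fullv)%VS = fullv.
  apply/vspaceP => y; rewrite memvf; case: (surj y) => x <-.
  by have := memv_img f (memvf x); rewrite lfunE.
have := limg_ker_dim f fullv; rewrite capfv kerf imf !dimvf !dim_matrix.
by rewrite [X in (_ + X)%N]mul1n [X in _ = X]mul1n.
Qed.

Section CodeFacts.
Variable F : finFieldType.
Variable n : nat.
Variable C : {vspace 'rV[F]_n}.
Hypothesis hd : min_dist C = 2%N.
Variable m : nat.
Variable X : 'I_m -> {set 'I_n}.
Hypothesis hXdisj : forall j1 j2, j1 != j2 -> [disjoint X j1 & X j2].
Hypothesis hw2 : forall c, c \in C -> wt c = 2%N -> exists j, supp c \subset X j.

Lemma wt_ge2 {c} : c \in C -> c != 0 -> (2 <= wt c)%N.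
Proof.
move=> cC nz; rewrite -hd /min_dist; apply: bigmin_leq.
by rewrite inE cC.
Qed.

Lemma small1 {c a} : c \in C -> supp c \subset [set a] -> c = 0.
Proof.
move=> cC hs; case: (eqVneq c 0) => // nz.
have := wt_ge2 cC nz; rewrite /wt.
have := subset_leq_card hs; rewrite cards1 => h1 h2.
by have := leq_trans h2 h1.
Qed.

Lemma X_uniq {a j1 j2} : a \in X j1 -> a \in X j2 -> j1 = j2.
Proof.
move=> h1 h2; case: (eqVneq j1 j2) => // ne.
by have := disjointFr (hXdisj _ _ ne) h1; rewrite h2.
Qed.

Lemma small2 {c a b j1 j2} : c \in C -> supp c \subset [set a; b] ->
  a \in X j1 -> b \in X j2 -> j1 != j2 -> c = 0.
Proof.
move=> cC hs ha hb ne; case: (eqVneq c 0) => // nz.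
have w2 := wt_ge2 cC nz.
have hc2 : (#|[set a; b]| <= 2)%N by rewrite cards2; case: (a != b).
have e2 : wt c = 2%N.
  apply/eqP; rewrite eqn_leq w2 andbT; exact: leq_trans (subset_leq_card hs) hc2.
have eqs : supp c = [set a; b].
  apply/eqP; rewrite eqEcard hs /=; rewrite -/(wt c) e2 //.
have [j hj] := hw2 _ cC e2.
have haj : a \in X j by apply: (subsetP hj); rewrite eqs !inE eqxx.
have hbj : b \in X j by apply: (subsetP hj); rewrite eqs !inE eqxx orbT.
by rewrite (X_uniq ha haj) (X_uniq hb hbj) eqxx in ne.
Qed.

Lemma ev2 (a b : F) (i1 i2 t : 'I_n) :
  (a *: delta_mx 0 i1 + b *: delta_mx 0 i2 : 'rV[F]_n) 0 t =
  a * (t == i1)%:R + b * (t == i2)%:R.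
Proof. by rewrite !mxE. Qed.

Lemma supp2 (a b : F) (i1 i2 : 'I_n) :
  supp (a *: delta_mx 0 i1 + b *: delta_mx 0 i2 : 'rV[F]_n) \subset [set i1; i2].
Proof.
apply/subsetP => t; rewrite !inE ev2.
by case: (t == i1); case: (t == i2); rewrite //= !mulr0 addr0 eqxx.
Qed.

Lemma delta_notin (a : F) (i : 'I_n) : a != 0 -> a *: delta_mx 0 i \notin C.
Proof.
move=> a0; apply/negP => h.
have hs : supp (a *: delta_mx 0 i : 'rV[F]_n) \subset [set i].
  apply/subsetP => t; rewrite !inE !mxE eqxx /=; case: (t == i); rewrite ?mulr0 ?eqxx //.
have := small1 h hs; move/rowP/(_ i); rewrite !mxE !eqxx /= mulr1 => e.
by rewrite e eqxx in a0.
Qed.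

End CodeFacts.

Section Key.
Variable F : finFieldType.
Variable n : nat.
Variable C : {vspace 'rV[F]_n}.
Hypothesis hd : min_dist C = 2%N.
Variable m : nat.
Variable X : 'I_m -> {set 'I_n}.
Hypothesis hXdisj : forall j1 j2, j1 != j2 -> [disjoint X j1 & X j2].
Hypothesis hw2 : forall c, c \in C -> wt c = 2%N -> exists j, supp c \subset X j.
Hypothesis hXcover : forall i : 'I_n, exists j, i \in X j.
Variable n_a : nat.
Hypothesis hXsize : forall j, #|X j| = n_a.
Hypothesis hna : forall v : 'rV[F]_n, v \notin C ->
           #|[set c in code_set C | hdist v c == 1%N]| = n_a.
Variable ii : 'I_m -> 'I_n.
Hypothesis hii : forall j, ii j \in X j.
Variable r : nat.
Variable G : 'M[F]_(n, r).
Hypothesis kerC : forall x, (x \in C) = (x *m G == 0).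

Let sm1 := @small1 F n C hd.
Let sm2 := @small2 F n C hd m X hXdisj hw2.
Let dni := @delta_notin F n C hd.
Let Xu := @X_uniq n m X hXdisj.

Lemma sdelta (a : F) (i : 'I_n) : (a *: delta_mx 0 i) *m G = a *: row i G.
Proof. by rewrite -scalemxAl -rowE. Qed.

Lemma key (a : F) (i : 'I_n) (j : 'I_m) : a != 0 -> i \in X j ->
  exists2 b, b != 0 & a *: row i G = b *: row (ii j) G.
Proof.
move=> a0 hij.
pose v : 'rV[F]_n := a *: delta_mx 0 i.
have vnC : v \notin C by exact: dni _ _ a0.
have vt : forall t, v 0 t = a * (t == i)%:R by move=> t; rewrite !mxE.
have ev : v = a *: delta_mx 0 i by [].
clearbody v.
pose Sv := [set c in code_set C | hdist v c == 1%N].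
have cSv : #|Sv| = n_a by exact: hna.
pose psi := fun c : 'rV[F]_n => odflt i [pick t | v 0 t != c 0 t].
have hpsi : forall c, c \in Sv -> [set t | v 0 t != c 0 t] = [set psi c].
  move=> c; rewrite inE => /andP[_ /cards1P[t0 ht0]].
  rewrite /psi; case: pickP => [t' ht' | none].
    have : t' \in [set t | v 0 t != c 0 t] by rewrite inE.
    by rewrite ht0 inE => /eqP->.
  have : t0 \in [set t | v 0 t != c 0 t] by rewrite ht0 inE.
  by rewrite inE none.
have agree : forall c, c \in Sv -> forall t, t != psi c -> v 0 t = c 0 t.
  move=> c cS t nt; apply/eqP; apply: contraNT nt => h.
  have : t \in [set t | v 0 t != c 0 t] by rewrite inE.
  by rewrite hpsi // inE.
have psiX : forall c, c \in Sv -> psi c \in X j.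
  move=> c cS; have cC : c \in C by move: cS; rewrite !inE => /andP[].
  have hs : supp c \subset [set i; psi c].
    apply/subsetP => t; rewrite !inE; case: (eqVneq t (psi c)) => [->|ntl].
      by rewrite orbT.
    rewrite orbF -(agree c cS t ntl) vt; case: (t == i) => //=.
    by rewrite mulr0 eqxx.
  case: (boolP (psi c \in X j)) => // hl.
  have [j' hj'] := hXcover (psi c).
  have ne : j != j' by apply/eqP => ejj; rewrite ejj hj' in hl.
  have c0 := sm2 _ _ _ _ _ cC hs hij hj' ne.
  have : psi c \in [set t | v 0 t != c 0 t] by rewrite hpsi // inE.
  have cl : c 0 (psi c) = 0 by rewrite {1}c0 mxE.
  rewrite inE vt cl; case: (eqVneq (psi c) i) => [e|nli].
    by move: hl; rewrite e hij.
  by rewrite mulr0 eqxx.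
have psiinj : {in Sv &, injective psi}.
  move=> c1 c2 h1 h2 e12.
  have c1C : c1 \in C by move: h1; rewrite !inE => /andP[].
  have c2C : c2 \in C by move: h2; rewrite !inE => /andP[].
  have dC : c1 - c2 \in C by apply: memvB.
  have hs : supp (c1 - c2) \subset [set psi c1].
    apply/subsetP => t; rewrite !inE !mxE.
    case: (eqVneq t (psi c1)) => [_|nt]; first by [].
    rewrite -(agree c1 h1 t nt) -(agree c2 h2 t) ?subrr ?eqxx //.
    by rewrite -e12.
  by have := sm1 _ _ dC hs; move/eqP; rewrite subr_eq0 => /eqP.
have imX : psi @: Sv = X j.
  apply/eqP; rewrite eqEcard; apply/andP; split.
    by apply/subsetP => l /imsetP[c cS ->]; exact: psiX.
  by rewrite hXsize card_in_imset // cSv.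
have : ii j \in psi @: Sv by rewrite imX.
case/imsetP => c cS ejc.
have cC : c \in C by move: cS; rewrite !inE => /andP[].
pose b := v 0 (ii j) - c 0 (ii j).
have b0 : b != 0.
  have : ii j \in [set t | v 0 t != c 0 t] by rewrite hpsi // inE ejc.
  by rewrite inE /b subr_eq0.
have evc : v - c = b *: delta_mx 0 (ii j).
  apply/rowP => t; rewrite !mxE /b.
  case: (eqVneq t (ii j)) => [->|nt]; first by rewrite mulr1.
  rewrite mulr0; rewrite ejc in nt.
  by rewrite (agree c cS t nt) subrr.
exists b => //.
rewrite -!sdelta -ev -evc mulmxBl.
by move: cC; rewrite kerC => /eqP ->; rewrite subr0.
Qed.
End Key.

Theorem proposition3p9 (F : finFieldType) (n k : nat) (C : {vspace 'rV[F]_n})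
  (hk : \dim C = k) (hd : min_dist C = 2%N)
  (hcr : completely_regular C) (hrho : cov_radius C = 1%N)
  (hkn : (k < n - 1)%N)
  (n_a : nat)
  (hna : forall v : 'rV[F]_n, v \notin C ->
           #|[set c in code_set C | hdist v c == 1%N]| = n_a)
  (m : nat) (hm : m = (n %/ n_a)%N)
  (X : 'I_m -> {set 'I_n})
  (hXsize : forall j, #|X j| = n_a)
  (hXdisj : forall j1 j2, j1 != j2 -> [disjoint X j1 & X j2])
  (hXcover : forall i : 'I_n, exists j, i \in X j)
  (hw2 : forall c, c \in C -> wt c = 2%N -> exists j, supp c \subset X j)
  (ii : 'I_m -> 'I_n) (hii : forall j, ii j \in X j) :
  let I := [set ii j | j : 'I_m] in
  let D' := [set c in code_set C | supp c \subset I] in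
  let D := [set (\row_(j < m) c 0 (ii j)) | c : 'rV[F]_n in D'] in
  (3 <= m)%N /\ hamming_code D.
Proof.
move=> I D' D.
have [r [G [kerC [surj dimr]]]] := @syndrome_exists F n C.
have n2 : (2 <= n)%N by lia.
have r2 : (2 <= r)%N by rewrite hk in dimr; lia.
pose q := #|F|.
have q1 : (1 < q)%N := finNzRing_gt1 F.
have rowG0 : forall i, row i G != 0.
  move=> i; apply/negP => /eqP h.
  have := @delta_notin F n C hd 1 i (oner_neq0 _).
  by rewrite kerC -scalemxAl -rowE h scaler0 eqxx.
have iiinj : injective ii.
  by move=> j1 j2 e; apply: (@X_uniq n m X hXdisj _ _ _ (hii j1)); rewrite e hii.
have Hcount : ((q - 1) * m = q ^ r - 1)%N.
  pose S := setX [set~ (0:F)] [set: 'I_m].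
  pose phi := fun p : F * 'I_m => p.1 *: row (ii p.2) G.
  have inj : {in S &, injective phi}.
    move=> [a j1] [b j2]; rewrite !in_setX !inE /= => /andP[a0 _] /andP[b0 _].
    rewrite /phi /= => e.
    have cC : (a *: delta_mx 0 (ii j1) + (- b) *: delta_mx 0 (ii j2) : 'rV[F]_n) \in C.
      by rewrite kerC mulmxDl -!scalemxAl -!rowE e scaleNr addrN.
    case: (eqVneq j1 j2) => [ej|ne].
    - subst j2.
      have hs := @supp2 F n a (- b) (ii j1) (ii j1); rewrite setUid in hs.
      have := @small1 F n C hd _ _ cC hs; move/rowP/(_ (ii j1)).
      rewrite ev2 eqxx !mulr1 mxE => /eqP; rewrite subr_eq0 => /eqP ->.
      by [].
    - have c0 := @small2 F n C hd m X hXdisj hw2 _ _ _ _ _ cC (@supp2 F n _ _ _ _) (hii j1) (hii j2) ne.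
      move/rowP: c0 => /(_ (ii j1)).
      rewrite ev2 eqxx (inj_eq iiinj) (negbTE ne) mulr0 addr0 mulr1 mxE => a0'.
      by rewrite a0' eqxx in a0.
  have img : [set phi p | p in S] = [set~ (0 : 'rV[F]_r)].
    apply/setP => y; rewrite in_setC1; apply/imsetP/idP.
    - case=> [[a j]]; rewrite in_setX !inE /= => /andP[a0 _] ->.
      by rewrite /phi /= scaler_eq0 negb_or a0 rowG0.
    - move=> y0; have [x hx] := surj y.
      have xnC : x \notin C by rewrite kerC hx.
      have hdist1 : (dist_code C x <= 1)%N.
        by rewrite -hrho /cov_radius; exact: leq_bigmax.
      have [c0 c0C hc0] : exists2 c0, c0 \in code_set C & (hdist x c0 <= 1)%N.
        case: (boolP [exists c0 in code_set C, hdist x c0 <= 1]%N) => [/exists_inP //|/exists_inPn hall].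
        have h2 : (2 <= dist_code C x)%N.
          apply: bigmin_geq => // c cC'; by rewrite ltnNge hall.
        by have := leq_trans h2 hdist1.
      have c0C' : c0 \in C by move: c0C; rewrite inE.
      have hne : [set t | x 0 t != c0 0 t] != set0.
        apply/eqP => e.
        have ex : x = c0.
          apply/rowP => t; apply/eqP; apply: contraT => h.
          have : t \in [set t | x 0 t != c0 0 t] by rewrite inE.
          by rewrite e inE.
        by rewrite ex c0C' in xnC.
      have : #|[set t | x 0 t != c0 0 t]| == 1%N.
        by rewrite eqn_leq hc0 /= card_gt0 hne.
      case/cards1P => i0 hi0.
      pose a := x 0 i0 - c0 0 i0.
      have a0 : a != 0.
        have : i0 \in [set t | x 0 t != c0 0 t] by rewrite hi0 inE.
        by rewrite inE /a subr_eq0.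
      have exc : x - c0 = a *: delta_mx 0 i0.
        apply/rowP => t; rewrite !mxE /a.
        case: (eqVneq t i0) => [->|nt]; first by rewrite mulr1.
        rewrite mulr0; apply/eqP; rewrite subr_eq0; apply: contraT => h.
        have : t \in [set t | x 0 t != c0 0 t] by rewrite inE.
        by rewrite hi0 inE (negbTE nt).
      have [j hj] := hXcover i0.
      have [b b0 eb] := @key F n C hd m X hXdisj hw2 hXcover n_a hXsize hna ii hii r G kerC _ _ _ a0 hj.
      exists (b, j); first by rewrite in_setX !inE b0.
      rewrite /phi /= -eb -hx.
      have e1 : x *m G = (x - c0) *m G.
        by move: c0C'; rewrite kerC mulmxBl => /eqP ->; rewrite subr0.
      by rewrite e1 exc -scalemxAl -rowE.
  have cS : #|S| = ((q - 1) * m)%N by rewrite cardsX cardsC1 cardsT card_ord subn1.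
  by rewrite -cS -(card_in_imset inj) img cardsC1 card_mx mul1n subn1.
have m3 : (3 <= m)%N.
  have hq : (q ^ 2 <= q ^ r)%N by rewrite leq_pexp2l // ltnW.
  move: Hcount hq; set Q := (q ^ r)%N; rewrite expnS expn1 => Hc hq.
  nia.
split => //.
exists r; split => //; split.
  by rewrite -Hcount mulKn // subn_gt0.
pose E : 'M[F]_(m, n) := \matrix_(j < m, i < n) ((ii j == i)%:R : F).
have rowEG : forall j, row j (E *m G) = row (ii j) G.
  move=> j; rewrite row_mul.
  have -> : row j E = delta_mx 0 (ii j) by apply/rowP => t; rewrite !mxE eq_sym.
  by rewrite -rowE.
have xE : forall (x : 'rV[F]_m) j, (x *m E) 0 (ii j) = x 0 j.
  move=> x j; rewrite mxE (bigD1 j) //= mxE eqxx mulr1 big1 ?addr0 // => j' nj.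
  by rewrite mxE (inj_eq iiinj) (negbTE nj) mulr0.
have xE0 : forall (x : 'rV[F]_m) t, t \notin I -> (x *m E) 0 t = 0.
  move=> x t tI; rewrite mxE big1 // => j _; rewrite mxE.
  have : ii j != t by apply: contraNneq tI => <-; apply: imset_f.
  by move/negbTE ->; rewrite mulr0.
exists (E *m G)^T; split.
  by move=> j; rewrite -tr_row rowEG trmx_eq0 rowG0.
split.
  move=> j1 j2 ne; rewrite -!tr_row !rowEG -tr_col_mx mxrank_tr.
  set K := col_mx (row (ii j1) G) (row (ii j2) G).
  suff: row_free K by move/eqP.
  rewrite -kermx_eq0; apply/eqP/row_matrixP => t; rewrite row0.
  set u := row t (kermx K).
  have uK : u *m K = 0 by rewrite /u -row_mul mulmx_ker row0.
  have eK : u *m K = lsubmx u 0 0 *: row (ii j1) G + rsubmx u 0 0 *: row (ii j2) G.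
    rewrite -{1}[u]hsubmxK mul_row_col [lsubmx u]mx11_scalar [rsubmx u]mx11_scalar.
    by rewrite !mul_scalar_mx !mxE ?mulr1n.
  have cC : (lsubmx u 0 0 *: delta_mx 0 (ii j1) + rsubmx u 0 0 *: delta_mx 0 (ii j2) : 'rV[F]_n) \in C.
    by rewrite kerC mulmxDl -!scalemxAl -!rowE -eK uK.
  have c0 := @small2 F n C hd m X hXdisj hw2 _ _ _ _ _ cC (@supp2 F n _ _ _ _) (hii j1) (hii j2) ne.
  have nii : (ii j1 == ii j2) = false by rewrite (inj_eq iiinj) (negbTE ne).
  have u10 : lsubmx u 0 0 = 0.
    move/rowP: (c0) => /(_ (ii j1)).
    rewrite ev2 eqxx nii mulr0 addr0 mulr1 => ->; by rewrite mxE.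
  have u20 : rsubmx u 0 0 = 0.
    move/rowP: (c0) => /(_ (ii j2)).
    rewrite ev2 eqxx eq_sym nii mulr0 add0r mulr1 => ->; by rewrite mxE.
  have l0 : lsubmx u = 0 by apply/matrixP => a b; rewrite !ord1 [RHS]mxE.
  have r0 : rsubmx u = 0 by apply/matrixP => a b; rewrite !ord1 [RHS]mxE.
  by rewrite -[u]hsubmxK l0 r0 row_mx0.
apply/setP => x; rewrite inE.
rewrite -trmx_mul trmx_eq0 mulmxA -kerC.
apply/imsetP/idP.
- case=> c; rewrite !inE => /andP[cC csupp] ->.
  have -> : (\row_j c 0 (ii j)) *m E = c.
    apply/rowP => t; case: (boolP (t \in I)) => tI.
    - case/imsetP: tI => j _ ->; by rewrite xE mxE.
    - rewrite xE0 //; apply/esym/eqP; apply: contraNT tI => h.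
      by apply: (subsetP csupp); rewrite inE.
  by [].
- move=> h; exists (x *m E).
    rewrite !inE h /=; apply/subsetP => t; rewrite inE; apply: contraR => tI.
    by rewrite xE0 // eqxx.
  by apply/rowP => j; rewrite mxE xE.
Qed.
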